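(* Let $G$ be a nonabelian torsion-free nilpotent group with an involution $\ast$. Then $G$ contains a $\ast$-invariant Heisenberg subgroup; more precisely, there exist $x,y\in G$ such that $[x,y]\neq1$, $[x,[x,y]]=[y,[x,y]]=1$, $x^\ast\in\{x,x^{-1}\}$ and $y^\ast\in\{y,y^{-1}\}$.
   Context: An involution on a group is an anti-automorphism of order $2$. Commutators are $[x,y]=x^{-1}y^{-1}xy$. *)

(* Defs.v *)
(* the group is an arbitrary (possibly infinite)
   group given by its carrier and operations, since MathComp groups are finite
   and a nontrivial torsion-free group is infinite. *)
From Stdlib Require Import Arith.

Section GroupDefs.
Context {G : Type} (mul : G -> G -> G) (inv : G -> G) (one : G).

Definition is_group : Prop :=
  (forall x y z, mul x (mul y z) = mul (mul x y) z) /\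
  (forall x, mul one x = x) /\ (forall x, mul x one = x) /\
  (forall x, mul (inv x) x = one) /\ (forall x, mul x (inv x) = one).

Definition comm (x y : G) : G := mul (mul (mul (inv x) (inv y)) x) y.

Fixpoint gpow (x : G) (n : nat) : G :=
  match n with 0 => one | S k => mul x (gpow x k) end.

Fixpoint upper_central (n : nat) : G -> Prop :=
  match n with
  | 0 => fun x => x = one
  | S k => fun x => forall y, upper_central k (comm x y)
  end.

Definition nilpotent : Prop := exists n, forall x, upper_central n x.

Definition torsion_free : Prop :=
  forall x n, gpow x (S n) = one -> x = one.

Definition nonabelian : Prop := exists x y, mul x y <> mul y x.

Definition involution (star : G -> G) : Prop :=
  (forall x y, star (mul x y) = mul (star y) (star x)) /\
  (forall x, star (star x) = x).

End GroupDefs.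

(* Main.v *)
Require Import Defs.
From Stdlib Require Import Classical.

Section Grp.
Variable G : Type.
Variables (mul : G -> G -> G) (inv : G -> G) (one : G).
Hypothesis Hg : is_group mul inv one.
Local Notation "x ** y" := (mul x y) (at level 40, left associativity).

Lemma massoc x y z : (x ** y) ** z = x ** (y ** z).
Proof. destruct Hg as [A _]. now rewrite A. Qed.
Lemma lid x : one ** x = x. Proof. destruct Hg as [_ [A _]]. apply A. Qed.
Lemma rid x : x ** one = x. Proof. destruct Hg as [_ [_ [A _]]]. apply A. Qed.
Lemma linv x : inv x ** x = one. Proof. destruct Hg as [_ [_ [_ [A _]]]]. apply A. Qed.
Lemma rinv x : x ** inv x = one. Proof. destruct Hg as [_ [_ [_ [_ A]]]]. apply A. Qed.
Lemma cl1 x y : inv x ** (x ** y) = y.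
Proof. now rewrite <- massoc, linv, lid. Qed.
Lemma cl2 x y : x ** (inv x ** y) = y.
Proof. now rewrite <- massoc, rinv, lid. Qed.
Lemma canc_l a x y : a ** x = a ** y -> x = y.
Proof. intro H. rewrite <- (cl1 a x), <- (cl1 a y). now rewrite H. Qed.
Lemma canc_r a x y : x ** a = y ** a -> x = y.
Proof. intro H. rewrite <- (rid x), <- (rid y), <- (rinv a), <- !massoc. now rewrite H. Qed.
Lemma inv_uniq x y : x ** y = one -> y = inv x.
Proof. intro H. apply (canc_l x). now rewrite H, rinv. Qed.
Lemma inv_inv x : inv (inv x) = x.
Proof. symmetry. apply inv_uniq. apply linv. Qed.
Lemma inv_mul x y : inv (x ** y) = inv y ** inv x.
Proof. symmetry. apply inv_uniq. rewrite massoc, cl2. apply rinv. Qed.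
Lemma inv_one : inv one = one.
Proof. symmetry. apply inv_uniq. apply lid. Qed.
Lemma eq_of_div a b : a ** inv b = one -> a = b.
Proof. intro H. apply (canc_r (inv b)). now rewrite H, rinv. Qed.

Ltac gs := repeat progress (rewrite ?massoc, ?inv_mul, ?inv_inv, ?inv_one, ?lid, ?rid,
  ?linv, ?rinv, ?cl1, ?cl2).

Definition central c := forall h, c ** h = h ** c.

Lemma comm_one_iff x y : comm mul inv x y = one <-> x ** y = y ** x.
Proof.
  unfold comm. split; intro H.
  - apply (canc_l (inv (y ** x))). rewrite linv, <- H. gs. reflexivity.
  - rewrite !massoc, H. gs. reflexivity.
Qed.

Lemma central_comm c x : central c -> comm mul inv x c = one.
Proof. intro H. apply comm_one_iff. symmetry. apply H. Qed.

Lemma central_mul a b : central a -> central b -> central (a ** b).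
Proof. intros A B h. rewrite massoc, B, <- massoc, A. apply massoc. Qed.

Lemma central_inv a : central a -> central (inv a).
Proof. intros A h. apply (canc_l a). rewrite <- massoc, rinv, lid, <- massoc, A, massoc, rinv, rid. reflexivity. Qed.

Lemma comm_mul_l a b h : comm mul inv (a ** b) h = inv b ** comm mul inv a h ** b ** comm mul inv b h.
Proof. unfold comm. gs. reflexivity. Qed.
Lemma comm_mul_r x u v : comm mul inv x (u ** v) = comm mul inv x v ** inv v ** comm mul inv x u ** v.
Proof. unfold comm. gs. reflexivity. Qed.

Definition Z2 a := forall h, central (comm mul inv a h).

Lemma Z2_hom a b h : Z2 a -> comm mul inv (a ** b) h = comm mul inv a h ** comm mul inv b h.
Proof.
  intro A. rewrite comm_mul_l. rewrite (massoc (inv b)), A. gs. reflexivity.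
Qed.

Lemma Z2_mul a b : Z2 a -> Z2 b -> Z2 (a ** b).
Proof. intros A B h. rewrite Z2_hom by exact A. apply central_mul; auto. Qed.

Lemma Z2_inv a : Z2 a -> Z2 (inv a).
Proof.
  intros A h.
  assert (E : comm mul inv (inv a) h = inv (comm mul inv a h)).
  { apply inv_uniq. rewrite <- Z2_hom by exact A. rewrite rinv. unfold comm. gs. reflexivity. }
  rewrite E. apply central_inv. apply A.
Qed.

Lemma Z2_hom_r x u v : Z2 x -> comm mul inv x (u ** v) = comm mul inv x u ** comm mul inv x v.
Proof.
  intro A. rewrite comm_mul_r. rewrite !massoc, (A u v), cl1. apply A.
Qed.

Variable star : G -> G.
Hypothesis Hs : involution mul star.

Lemma star_mul x y : star (x ** y) = star y ** star x. Proof. apply Hs. Qed.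
Lemma star_star x : star (star x) = x. Proof. apply Hs. Qed.
Lemma star_one : star one = one.
Proof.
  apply (canc_r (star one)). rewrite <- star_mul, !lid. reflexivity.
Qed.
Lemma star_inv x : star (inv x) = inv (star x).
Proof. apply inv_uniq. rewrite <- star_mul, linv. apply star_one. Qed.

Definition sg x := inv (star x).
Lemma sg_mul x y : sg (x ** y) = sg x ** sg y.
Proof. unfold sg. now rewrite star_mul, inv_mul. Qed.
Lemma sg_sg x : sg (sg x) = x.
Proof. unfold sg. now rewrite star_inv, inv_inv, star_star. Qed.
Lemma sg_inv x : sg (inv x) = inv (sg x).
Proof. unfold sg. now rewrite star_inv. Qed.
Lemma sg_comm x y : sg (comm mul inv x y) = comm mul inv (sg x) (sg y).
Proof. unfold comm. now rewrite !sg_mul, !sg_inv. Qed.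
Lemma central_sg c : central c -> central (sg c).
Proof.
  intros C h. rewrite <- (sg_sg h) at 1 2. rewrite <- !sg_mul. now rewrite C.
Qed.
Lemma Z2_sg a : Z2 a -> Z2 (sg a).
Proof.
  intros A h. rewrite <- (sg_sg h). rewrite <- sg_comm. apply central_sg, A.
Qed.

Definition F u := u ** sg u.
Definition dd u := inv u ** sg u.
Fixpoint iterF (k : nat) (u : G) : G := match k with 0 => u | S k => iterF k (F u) end.

Lemma dd_F u : dd (F u) = comm mul inv (dd u) u.
Proof.
  unfold dd, F, comm. rewrite sg_mul, sg_sg. generalize (sg u) as s. intro s. gs. reflexivity.
Qed.

Lemma iter_fixed j : forall u, upper_central mul inv one j (dd u) -> dd (iterF (S j) u) = one.
Proof.
  induction j as [|j IH]; intros u H.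
  - simpl in H. simpl. rewrite dd_F, H. unfold comm. gs. reflexivity.
  - simpl in H. change (iterF (S (S j)) u) with (iterF (S j) (F u)). apply IH.
    rewrite dd_F. apply H.
Qed.

Lemma dd_one v : dd v = one -> star v = inv v.
Proof.
  unfold dd, sg. intro H. apply inv_uniq in H. rewrite inv_inv in H.
  rewrite <- H at 2. now rewrite inv_inv.
Qed.

Hypothesis Htf : torsion_free mul one.

Lemma sq_ne p : p <> one -> p ** p <> one.
Proof.
  intros H E. apply H. apply (Htf p 1). simpl. now rewrite rid.
Qed.

Section Nice.
Variable P : G -> Prop.
Variable psi : G -> G.
Hypothesis Pmul : forall u v, P u -> P v -> P (u ** v).
Hypothesis Pinv : forall u, P u -> P (inv u).
Hypothesis Psg : forall u, P u -> P (sg u).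
Hypothesis psi_hom : forall u v, P u -> P v -> psi (u ** v) = psi u ** psi v.
Hypothesis psi_c : forall u, P u -> central (psi u).

Lemma P_iter k : forall u, P u -> P (iterF k u).
Proof.
  induction k; intros u H; simpl; auto. apply IHk. unfold F. auto.
Qed.

Lemma iter_psi k : forall u, P u -> psi u ** psi (sg u) <> one -> psi (iterF (S k) u) <> one.
Proof.
  induction k as [|k IH]; intros u Pu H.
  - simpl. unfold F. rewrite psi_hom; auto.
  - change (iterF (S (S k)) u) with (iterF (S k) (F u)). apply IH.
    + unfold F; auto.
    + unfold F. rewrite sg_mul, sg_sg. rewrite !psi_hom; auto.
      rewrite (psi_c (sg u) (Psg u Pu) (psi u)). now apply sq_ne.
Qed.

Lemma nice n : (forall x, upper_central mul inv one n x) ->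
  forall u, P u -> psi u <> one ->
  exists w, P w /\ psi w <> one /\ (star w = w \/ star w = inv w).
Proof.
  intros Hn u Pu Hu.
  destruct (classic (psi u ** psi (sg u) = one)) as [Hp|Hp].
  - exists (u ** star u).
    assert (Es : star u = inv (sg u)) by (unfold sg; now rewrite inv_inv).
    assert (Ps : P (star u)) by (rewrite Es; auto).
    split; [auto|split].
    + assert (P1 : P one) by (rewrite <- (rinv u); auto).
      assert (E1 : psi one = one).
      { apply (canc_l (psi one)). rewrite <- psi_hom by auto. now rewrite !rid. }
      assert (Ei : psi (star u) = inv (psi (sg u))).
      { apply inv_uniq. rewrite Es, <- psi_hom by auto. now rewrite rinv. }
      rewrite psi_hom by auto. rewrite Ei. intro E. apply eq_of_div in E.
      rewrite <- E in Hp. now apply (sq_ne (psi u)).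
    + left. now rewrite star_mul, star_star.
  - exists (iterF (S n) u). split; [apply P_iter; auto|split].
    + apply iter_psi; auto.
    + right. apply dd_one. apply iter_fixed. apply Hn.
Qed.
End Nice.

Lemma uc2 a : upper_central mul inv one 2 a <-> Z2 a.
Proof.
  simpl. split; intros H h.
  - intro z. apply comm_one_iff. apply H.
  - intro z. apply comm_one_iff. apply H.
Qed.

Lemma exists_Z2 : nilpotent mul inv one -> nonabelian mul ->
  exists a g, Z2 a /\ comm mul inv a g <> one.
Proof.
  intros [n Hn] [x0 [y0 Hxy]].
  apply NNPP. intro Hno.
  assert (H21 : forall x, upper_central mul inv one 2 x -> upper_central mul inv one 1 x).
  { intros x Hx y. apply uc2 in Hx. apply NNPP. intro Hc. apply Hno. exists x, y. auto. }
  assert (Hsh : forall k x, upper_central mul inv one (S (S k)) x <-> upper_central mul inv one (S k) x).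
  { induction k as [|k IH]; intro x.
    - split; [apply H21|]. intros H y z. simpl in H. simpl. rewrite H. unfold comm. gs. reflexivity.
    - split; intros H y; apply IH; exact (H y). }
  assert (Hall : forall m x, upper_central mul inv one (S m) x -> upper_central mul inv one 1 x).
  { induction m as [|m IH]; intros x H; auto. apply IH. apply Hsh. exact H. }
  destruct n as [|n].
  - apply Hxy. rewrite (Hn x0), (Hn y0). reflexivity.
  - apply Hxy. apply comm_one_iff. apply (Hall n x0 (Hn x0)).
Qed.

Theorem main_thm : nilpotent mul inv one -> nonabelian mul ->
  exists x y : G,
    comm mul inv x y <> one /\
    comm mul inv x (comm mul inv x y) = one /\
    comm mul inv y (comm mul inv x y) = one /\
    (star x = x \/ star x = inv x) /\
    (star y = y \/ star y = inv y).
Proof.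
  intros Hnil Hna.
  destruct (exists_Z2 Hnil Hna) as [a [g [Za Hag]]].
  destruct Hnil as [n Hn].
  destruct (nice Z2 (fun a => comm mul inv a g) Z2_mul Z2_inv Z2_sg
     (fun u v Pu Pv => Z2_hom u v g Pu) (fun u Pu => Pu g) n Hn a Za Hag)
    as [x [Zx [Hxg Hx]]].
  destruct (nice (fun _ => True) (comm mul inv x) (fun _ _ _ _ => I) (fun _ _ => I)
     (fun _ _ => I) (fun u v _ _ => Z2_hom_r x u v Zx) (fun u _ => Zx u) n Hn g I Hxg)
    as [y [_ [Hxy Hy]]].
  exists x, y. repeat split; auto; apply central_comm, Zx.
Qed.
End Grp.

Theorem proposition2p4 (G : Type) (mul : G -> G -> G) (inv : G -> G) (one : G)
  (star : G -> G) :
  is_group mul inv one ->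
  nilpotent mul inv one ->
  torsion_free mul one ->
  nonabelian mul ->
  involution mul star ->
  exists x y : G,
    comm mul inv x y <> one /\
    comm mul inv x (comm mul inv x y) = one /\
    comm mul inv y (comm mul inv x y) = one /\
    (star x = x \/ star x = inv x) /\
    (star y = y \/ star y = inv y).
Proof.
  intros Hg Hnil Htf Hna Hs.
  exact (main_thm G mul inv one Hg star Hs Htf Hnil Hna).
Qed.
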